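(* Consider the ring grooming instance with $n=9$, $c=1$ and traffic demands $\{1,2\},\{1,3\},\{2,3\},\{4,5\},\{4,6\},\{5,6\},\{7,8\},\{7,9\},\{8,9\}$ (each once). Then: (i) the minimum number of ADMs is $m=9$; (ii) every feasible routing achieving $9$ ADMs uses at least $3$ rings carrying traffic; (iii) there is a feasible routing using only $2$ rings carrying traffic; hence the number of rings carrying traffic and the number of ADMs cannot be minimized simultaneously for this instance.
   Context: Ring grooming. An instance consists of integers $n\ge 2$ (ring size) and $c\ge 1$ (capacity), and a finite list $L$ of unordered pairs $\{j,k\}$ with $j\ne k$, $j,k\in\{1,\dots,n\}$ (repetitions allowed); these are the traffic demands. Let $d_{jk}=d_{kj}$ be the number of times $\{j,k\}$ occurs in $L$ (the traffic matrix; $d_{jj}=0$). Let $C_n$ be the cycle graph on vertices $1,\dots,n$ in cyclic order, with edges $\{l,l+1\}$ for $1\le l<n$ and $\{n,1\}$. A solution uses some finite number $r$ of ''rings'', each a copy of $C_n$ in which every edge has capacity $c$. A routing specifies, for every ring $i$ and every pair $j<k$, nonnegative integers $t^0_{ijk},t^1_{ijk}$: the amounts of $\{j,k\}$-traffic sent on ring $i$ along each of the two arcs of $C_n$ between $j$ and $k$. It is feasible if $\sum_i (t^0_{ijk}+t^1_{ijk})=d_{jk}$ for all $j<k$, and for every ring $i$ and every edge $e$ of $C_n$ the total traffic routed on ring $i$ along arcs containing $e$ is at most $c$. Ring $i$ needs an ADM (add/drop multiplexer) at vertex $j$ iff some traffic with endpoint $j$ is routed on ring $i$. The cost of a routing is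 the total number of ADMs, i.e. the number of pairs (ring $i$, vertex $j$) at which an ADM is needed. $m=m(n,c,L)$ denotes the minimum cost over all feasible routings. *)

(* Defs.v *)
From mathcomp Require Import all_boot.
Set Implicit Arguments. Unset Strict Implicit. Unset Printing Implicit Defensive.

(* Ring vertices 1..n are represented by ordinals v : 'I_n, with v standing
   for vertex v+1.  Edge e : 'I_n is the edge {e+1, e+2} (and edge n-1 is {n,1}).
   Traffic demands L are given with the paper's labels 1..n. *)

Definition demand (n : nat) (L : seq (nat * nat)) (j k : 'I_n) : nat :=
  count (fun p => (p == (j.+1, k.+1)) || (p == (k.+1, j.+1))) L.

(* A routing on r rings: t i j k b = t^b_{ijk} (b = false: arc 0, b = true: arc 1),
   only entries with j < k are meaningful.
   Arc 0 between j < k is the path j, j+1, ..., k: it contains edge e iff j <= e < k.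
   Arc 1 is the complementary arc. *)
Definition routing (n r : nat) := 'I_r -> 'I_n -> 'I_n -> bool -> nat.

Definition on_arc0 (n : nat) (j k e : 'I_n) : bool := (j <= e) && (e < k).

Definition edge_load (n r : nat) (t : routing n r) (i : 'I_r) (e : 'I_n) : nat :=
  \sum_(j < n) \sum_(k < n | j < k)
     (if on_arc0 j k e then t i j k false else t i j k true).

Definition feasible (n c : nat) (L : seq (nat * nat)) (r : nat) (t : routing n r) : Prop :=
  (forall j k : 'I_n, j < k ->
     \sum_(i < r) (t i j k false + t i j k true) = demand L j k) /\
  (forall (i : 'I_r) (e : 'I_n), edge_load t i e <= c).

Definition needs_adm (n r : nat) (t : routing n r) (i : 'I_r) (v : 'I_n) : bool :=
  [exists j : 'I_n, exists k : 'I_n,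
     [&& j < k, (j == v) || (k == v) & 0 < t i j k false + t i j k true]].

Definition cost (n r : nat) (t : routing n r) : nat :=
  #|[set p : 'I_r * 'I_n | needs_adm t p.1 p.2]|.

Definition carries (n r : nat) (t : routing n r) (i : 'I_r) : bool :=
  [exists j : 'I_n, exists k : 'I_n, (j < k) && (0 < t i j k false + t i j k true)].

Definition rings_used (n r : nat) (t : routing n r) : nat :=
  #|[set i : 'I_r | carries t i]|.

Definition is_min_cost (n c : nat) (L : seq (nat * nat)) (m : nat) : Prop :=
  (exists r (t : routing n r), feasible c L t /\ cost t = m) /\
  (forall r (t : routing n r), feasible c L t -> m <= cost t).

Definition L_ex : seq (nat * nat) :=
  [:: (1,2); (1,3); (2,3); (4,5); (4,6); (5,6); (7,8); (7,9); (8,9)].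

(* Main.v *)
Require Import Defs.
From mathcomp Require Import all_boot.
From mathcomp Require Import zify.

Set Implicit Arguments. Unset Strict Implicit. Unset Printing Implicit Defensive.

Notation o n := (@Ordinal 9 n isT).

Definition car (r : nat) (t : routing 9 r) i (j k : 'I_9) := 0 < t i j k false + t i j k true.

Lemma expand n r (t : routing n.+1 r) i e : edge_load t i e =
  \sum_(j < n.+1) \sum_(k < n.+1)
     (if j < k then (if on_arc0 j k e then t i j k false else t i j k true) else 0).
Proof. by apply: eq_bigr => j _; rewrite big_mkcond. Qed.

Lemma carried_exists r (t : routing 9 r) (j k : 'I_9) :
  feasible 1 L_ex t -> j < k -> 0 < demand L_ex j k -> exists i, car t i j k.
Proof.
move=> [Hd _] Hjk Hpos.
case: (boolP [exists i, car t i j k]) => [/existsP // | /existsPn Hn].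
move: Hpos; rewrite -(Hd j k Hjk) big1 // => i _.
by move: (Hn i); rewrite /car lt0n negbK => /eqP.
Qed.

Lemma adm_of r (t : routing 9 r) i (j k : 'I_9) :
  car t i j k -> j < k -> needs_adm t i j /\ needs_adm t i k.
Proof.
rewrite /car => Hc Hjk; split; apply/existsP; exists j; apply/existsP; exists k;
  by rewrite Hjk Hc eqxx ?orbT.
Qed.

Lemma cover r (t : routing 9 r) (v : 'I_9) :
  feasible 1 L_ex t -> exists i, needs_adm t i v.
Proof.
move=> F.
case: v => [[|[|[|[|[|[|[|[|[|//]]]]]]]]]] Hv.
- have [i Hi] := carried_exists (j := Ordinal Hv) (k := o 1) F isT isT.
  by exists i; case: (adm_of Hi isT).
- have [i Hi] := carried_exists (j := o 0) (k := Ordinal Hv) F isT isT.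
  by exists i; case: (adm_of Hi isT).
- have [i Hi] := carried_exists (j := o 0) (k := Ordinal Hv) F isT isT.
  by exists i; case: (adm_of Hi isT).
- have [i Hi] := carried_exists (j := Ordinal Hv) (k := o 4) F isT isT.
  by exists i; case: (adm_of Hi isT).
- have [i Hi] := carried_exists (j := o 3) (k := Ordinal Hv) F isT isT.
  by exists i; case: (adm_of Hi isT).
- have [i Hi] := carried_exists (j := o 3) (k := Ordinal Hv) F isT isT.
  by exists i; case: (adm_of Hi isT).
- have [i Hi] := carried_exists (j := Ordinal Hv) (k := o 7) F isT isT.
  by exists i; case: (adm_of Hi isT).
- have [i Hi] := carried_exists (j := o 6) (k := Ordinal Hv) F isT isT.
  by exists i; case: (adm_of Hi isT).
- have [i Hi] := carried_exists (j := o 6) (k := Ordinal Hv) F isT isT.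
  by exists i; case: (adm_of Hi isT).
Qed.

Definition Sadm r (t : routing 9 r) := [set p : 'I_r * 'I_9 | needs_adm t p.1 p.2].

Lemma proj_full r (t : routing 9 r) : feasible 1 L_ex t -> snd @: Sadm t = setT.
Proof.
move=> F; apply/setP => v; rewrite in_setT.
have [i Hi] := cover v F.
by apply/imsetP; exists (i, v); rewrite // inE.
Qed.

Lemma cost_ge r (t : routing 9 r) : feasible 1 L_ex t -> 9 <= cost t.
Proof.
move=> F; have := leq_imset_card snd (Sadm t).
by rewrite proj_full // cardsT card_ord.
Qed.


Definition contrib r (t : routing 9 r) i (p : 'I_9 * 'I_9) (e : 'I_9) :=
  if on_arc0 p.1 p.2 e then t i p.1 p.2 false else t i p.1 p.2 true.

Lemma sub_sum r (t : routing 9 r) i e (s : seq ('I_9 * 'I_9)) :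
  uniq s -> all (fun p : 'I_9 * 'I_9 => p.1 < p.2) s ->
  \sum_(p <- s) contrib t i p e <= edge_load t i e.
Proof.
move=> U A; rewrite /edge_load pair_big_dep /= (big_uniq _ U) big_mkcond.
rewrite [X in _ <= X]big_mkcond /=; apply: leq_sum => p _.
case: ifP => // ps; rewrite (allP A p ps).
by case: p ps.
Qed.

Fixpoint cnt (s : seq ('I_9 * 'I_9)) (bs : seq bool) (e : nat) : nat :=
  match s, bs with
  | p :: s', b :: bs' => (if ((p.1 : nat) <= e) && (e < p.2) then ~~ b else b) + cnt s' bs' e
  | _, _ => 0
  end.

Definition bt r (t : routing 9 r) i (p : 'I_9 * 'I_9) := t i p.1 p.2 false == 0.

Lemma cnt_le r (t : routing 9 r) i (e : 'I_9) (s : seq ('I_9 * 'I_9)) :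
  all (fun p : 'I_9 * 'I_9 => car t i p.1 p.2) s ->
  cnt s (map (bt t i) s) e <= \sum_(p <- s) contrib t i p e.
Proof.
elim: s => [|p s IH] /=; first by rewrite big_nil.
move=> /andP[Cp As]; rewrite big_cons; apply: leq_add; last exact: IH.
rewrite /contrib /on_arc0 /bt; move: Cp; rewrite /car.
case: (t i p.1 p.2 false) => [|m] /=; case: ifP => //=.
Qed.

Lemma overload r (t : routing 9 r) i (s : seq ('I_9 * 'I_9)) :
  feasible 1 L_ex t -> uniq s -> all (fun p : 'I_9 * 'I_9 => p.1 < p.2) s ->
  all (fun p : 'I_9 * 'I_9 => car t i p.1 p.2) s ->
  (forall bs, size bs = size s -> has (fun e => 1 < cnt s bs e) (iota 0 9)) -> False.
Proof.
move=> [_ Hc] U A C H.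
have /hasP [e He Hlt] := H (map (bt t i) s) (size_map _ _).
have He9 : e < 9 by move: He; rewrite mem_iota.
have L1 := Hc i (Ordinal He9).
have L2 := @sub_sum r t i (Ordinal He9) s U A.
have L3 := @cnt_le r t i (Ordinal He9) s C.
have := leq_trans Hlt (leq_trans L3 (leq_trans L2 L1)).
by [].
Qed.

Lemma uniq_adm r (t : routing 9 r) i i' v :
  feasible 1 L_ex t -> cost t = 9 -> needs_adm t i v -> needs_adm t i' v -> i = i'.
Proof.
move=> F C9 Hi Hi'.
have inj : {in Sadm t &, injective snd}.
  by apply/imset_injP; rewrite proj_full // cardsT card_ord; apply/eqP; exact: esym C9.
have := inj (i, v) (i', v); rewrite !inE => /(_ Hi Hi' erefl).
by case.
Qed.

Lemma tri r (t : routing 9 r) (a b c : 'I_9) :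
  feasible 1 L_ex t -> cost t = 9 -> a < b -> b < c ->
  0 < demand L_ex a b -> 0 < demand L_ex a c -> 0 < demand L_ex b c ->
  exists i, [&& car t i a b, car t i a c & car t i b c].
Proof.
move=> F C9 ab bc dab dac dbc.
have ac : a < c by apply: ltn_trans bc.
have [i1 H1] := carried_exists F ab dab.
have [i2 H2] := carried_exists F ac dac.
have [i3 H3] := carried_exists F bc dbc.
have [A1 B1] := adm_of H1 ab.
have [A2 C2] := adm_of H2 ac.
have [B3 C3] := adm_of H3 bc.
have E2 := uniq_adm F C9 A1 A2.
have E3 := uniq_adm F C9 B1 B3.
by exists i1; rewrite H1 -E2 in H2 *; rewrite H2 -E3 in H3 *; rewrite H3.
Qed.
Definition s12 := [:: (o 0, o 1); (o 0, o 2); (o 1, o 2); (o 3, o 4); (o 3, o 5); (o 4, o 5)].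
Lemma comb12 bs : size bs = size s12 -> has (fun e => 1 < cnt s12 bs e) (iota 0 9).
Proof.
case: bs => [|b1[|b2[|b3[|b4[|b5[|b6[|]]]]]]] //= _.
by case: b1; case: b2; case: b3; case: b4; case: b5; case: b6; vm_compute.
Qed.
Lemma u12 : uniq s12. Proof. by vm_compute. Qed.
Lemma a12 : all (fun p : 'I_9 * 'I_9 => p.1 < p.2) s12. Proof. by []. Qed.
Definition t3 : routing 9 3 := fun i j k b =>
  if (j < k) && (j %/ 3 == k %/ 3) && (i == j %/ 3 :> nat)
  then nat_of_bool (if b then k - j == 2 else k - j == 1) else 0.
Lemma t3_load (i : 'I_3) (e : 'I_9) : edge_load t3 i e <= 1.
Proof. rewrite expand !big_ord_recl !big_ord0.
case: i => [[|[|[|//]]]] Hi; case: e => [[|[|[|[|[|[|[|[|[|//]]]]]]]]]] He; vm_compute; reflexivity. Qed.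
Lemma t3_dem (j k : 'I_9) : j < k -> \sum_(i < 3) (t3 i j k false + t3 i j k true) = demand L_ex j k.
Proof. rewrite !big_ord_recl big_ord0.
case: j => [[|[|[|[|[|[|[|[|[|//]]]]]]]]]] Hj; case: k => [[|[|[|[|[|[|[|[|[|//]]]]]]]]]] Hk;
 vm_compute; intros; first [reflexivity | discriminate]. Qed.
Lemma t3_cost : cost t3 <= 9.
Proof.
have : Sadm t3 \subset [set (inord (v %/ 3), v) | v : 'I_9].
  apply/subsetP => -[i v]; rewrite inE => /existsP[j /existsP[k /and3P[Hjk Hv Ht]]].
  move: Ht; rewrite /t3; case: ifP => [/andP[/andP[_ /eqP Hjk3] /eqP Hij] _|]; last by [].
  apply/imsetP; exists v => //; congr pair; apply: val_inj; rewrite /= inordK.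
    by case/orP: Hv => /eqP /= <-; rewrite Hij // Hjk3.
  have := ltn_ord v; lia.
move/subset_leq_card => H; apply: leq_trans H _.
apply: leq_trans (leq_imset_card _ _) _; by rewrite ?cardsT card_ord.
Qed.
Definition t2 : routing 9 2 := fun i j k b =>
  if (j.+1 == k) && (j %% 3 != 2) then (if (i == 0 :> nat) && ~~ b then 1 else 0)
  else if (j.+2 == k) && (j %% 3 == 0) then (if (i == 1 :> nat) && ~~b then 1 else 0) else 0.
Lemma t2_load (i : 'I_2) (e : 'I_9) : edge_load t2 i e <= 1.
Proof. rewrite expand !big_ord_recl !big_ord0.
case: i => [[|[|//]]] Hi; case: e => [[|[|[|[|[|[|[|[|[|//]]]]]]]]]] He; vm_compute; reflexivity. Qed.
Lemma t2_dem (j k : 'I_9) : j < k -> \sum_(i < 2) (t2 i j k false + t2 i j k true) = demand L_ex j k.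
Proof. rewrite !big_ord_recl big_ord0.
case: j => [[|[|[|[|[|[|[|[|[|//]]]]]]]]]] Hj; case: k => [[|[|[|[|[|[|[|[|[|//]]]]]]]]]] Hk;
 vm_compute; intros; first [reflexivity | discriminate]. Qed.
Lemma t2_used : rings_used t2 = 2.
Proof.
rewrite /rings_used; suff -> : [set i : 'I_2 | carries t2 i] = setT by rewrite cardsT card_ord.
apply/setP => i; rewrite !inE.
case: i => [[|[|//]]] Hi; apply/existsP; exists (o 0); apply/existsP.
  by exists (o 1); vm_compute.
by exists (o 2); vm_compute.
Qed.

Definition s13 := [:: (o 0, o 1); (o 0, o 2); (o 1, o 2); (o 6, o 7); (o 6, o 8); (o 7, o 8)].
Lemma comb13 bs : size bs = size s13 -> has (fun e => 1 < cnt s13 bs e) (iota 0 9).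
Proof.
case: bs => [|b1[|b2[|b3[|b4[|b5[|b6[|]]]]]]] //= _.
by case: b1; case: b2; case: b3; case: b4; case: b5; case: b6; vm_compute.
Qed.
Lemma u13 : uniq s13. Proof. by vm_compute. Qed.
Lemma a13 : all (fun p : 'I_9 * 'I_9 => p.1 < p.2) s13. Proof. by []. Qed.
Definition s23 := [:: (o 3, o 4); (o 3, o 5); (o 4, o 5); (o 6, o 7); (o 6, o 8); (o 7, o 8)].
Lemma comb23 bs : size bs = size s23 -> has (fun e => 1 < cnt s23 bs e) (iota 0 9).
Proof.
case: bs => [|b1[|b2[|b3[|b4[|b5[|b6[|]]]]]]] //= _.
by case: b1; case: b2; case: b3; case: b4; case: b5; case: b6; vm_compute.
Qed.
Lemma u23 : uniq s23. Proof. by vm_compute. Qed.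
Lemma a23 : all (fun p : 'I_9 * 'I_9 => p.1 < p.2) s23. Proof. by []. Qed.

Theorem mainTheorem5 :
  is_min_cost 9 1 L_ex 9 /\
  (forall r (t : routing 9 r), feasible 1 L_ex t -> cost t = 9 -> 3 <= rings_used t) /\
  (exists r (t : routing 9 r), feasible 1 L_ex t /\ rings_used t = 2).
Proof.
have F3 : feasible 1 L_ex t3 by split; [exact: t3_dem | exact: t3_load].
have F2 : feasible 1 L_ex t2 by split; [exact: t2_dem | exact: t2_load].
split; [split|split].
- exists 3, t3; split => //; apply/eqP; rewrite eqn_leq t3_cost; exact: cost_ge.
- move=> r t F; exact: cost_ge.
- move=> r t F C9.
  have [i1 /and3P[a1 b1 c1]] := @tri r t (o 0) (o 1) (o 2) F C9 isT isT isT isT isT.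
  have [i2 /and3P[a2 b2 c2]] := @tri r t (o 3) (o 4) (o 5) F C9 isT isT isT isT isT.
  have [i3 /and3P[a3 b3 c3]] := @tri r t (o 6) (o 7) (o 8) F C9 isT isT isT isT isT.
  have N12 : i1 != i2.
    apply/eqP => E; rewrite -E in a2 b2 c2.
    by apply: (@overload r t i1 s12 F u12 a12 _ comb12); rewrite /= a1 b1 c1 a2 b2 c2.
  have N13 : i1 != i3.
    apply/eqP => E; rewrite -E in a3 b3 c3.
    by apply: (@overload r t i1 s13 F u13 a13 _ comb13); rewrite /= a1 b1 c1 a3 b3 c3.
  have N23 : i2 != i3.
    apply/eqP => E; rewrite -E in a3 b3 c3.
    by apply: (@overload r t i2 s23 F u23 a23 _ comb23); rewrite /= a2 b2 c2 a3 b3 c3.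
  have Hsub : i1 |: [set i2; i3] \subset [set i | carries t i].
    apply/subsetP => x; rewrite !inE => /or3P[] /eqP ->; apply/existsP.
    + by exists (o 0); apply/existsP; exists (o 1); move: a1; rewrite /car => ->.
    + by exists (o 3); apply/existsP; exists (o 4); move: a2; rewrite /car => ->.
    + by exists (o 6); apply/existsP; exists (o 7); move: a3; rewrite /car => ->.
  apply: leq_trans (subset_leq_card Hsub).
  by rewrite cardsU1 cards2 in_set2 (negPf N12) (negPf N13) N23.
- by exists 2, t2; split => //; exact: t2_used.
Qed.
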